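(* The VC-density of the edge relation on the class $\mathcal H$ of all Hamming graphs is $2$.
   Context: For $d,q\in\mathbb N$ and a set $S$ with $|S|=q$, the Hamming graph $H(d,q)$ has vertex set $S^d$, two vertices adjacent iff they agree in all but exactly one coordinate; $\mathcal H=\{H(d,q)\mid d,q\in\mathbb N\}$. For a graph $G$, the edge relation set system is $(V(G),\mathcal S_G)$ with $\mathcal S_G=\{N(v)\mid v\in V(G)\}$ ($N(v)$ the set of neighbours of $v$). Its shatter function is $\pi_G(n)=\max\{|\{S\cap A\mid S\in\mathcal S_G\}| : A\subseteq V(G), |A|=n\}$. For a class $\mathcal C$ of graphs, $\pi_{\mathcal C}(n)=\max\{\pi_G(n)\mid G\in\mathcal C\}$, the VC-dimension of the edge relation on $\mathcal C$ is the supremum over $G\in\mathcal C$ of the largest size of a set $A$ with $\{A\cap S\mid S\in\mathcal S_G\}=\mathcal P(A)$, and the VC-density of the edge relation on $\mathcal C$ is $\inf\{r\in\mathbb R^+ : \pi_{\mathcal C}(n)\in\mathcal O(n^r)\}$ if that VC-dimension is finite, and $\infty$ otherwise. *)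

(* Defs.v *)
From HB Require Import structures.
From mathcomp Require Import all_boot all_order all_algebra.
From mathcomp Require Import boolp classical_sets reals ereal exp.
Set Implicit Arguments. Unset Strict Implicit. Unset Printing Implicit Defensive.
Import Order.TTheory GRing.Theory Num.Theory.

Definition hvert (d q : nat) := {ffun 'I_d -> 'I_q}.

Definition hadj (d q : nat) (x y : hvert d q) : bool :=
  #|[set i | x i != y i]| == 1%N.

Definition hnbhd (d q : nat) (v : hvert d q) : {set hvert d q} :=
  [set y | hadj v y].

Definition htraces (d q : nat) (A : {set hvert d q}) : {set {set hvert d q}} :=
  [set hnbhd v :&: A | v : hvert d q].

(* shatter function pi_G(n) of the edge relation set system of H(d,q)
   (0 if there is no n-element vertex set) *)
Definition hshatter (d q n : nat) : nat :=
  \max_(A : {set hvert d q} | #|A| == n) #|htraces A|.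

Local Open Scope classical_set_scope.
Local Open Scope ring_scope.

(* pi_H(n) = max over all Hamming graphs (a supremum of a set of naturals
   bounded by 2^n) *)
Definition shatterH (R : realType) (n : nat) : R :=
  sup [set x : R | exists d q : nat, x = (hshatter d q n)%:R].

Definition vcdimH_finite : Prop :=
  exists k : nat, forall (d q : nat) (A : {set hvert d q}),
    htraces A = powerset A -> (#|A| <= k)%N.

Definition shatterH_bigO (R : realType) (r : R) : Prop :=
  exists (C : R) (N : nat), forall n : nat, (N <= n)%N ->
    shatterH R n <= C * (n%:R `^ r).

Definition vcdensityH (R : realType) : \bar R :=
  if `[< vcdimH_finite >] then
    (inf [set r : R | 0 < r /\ shatterH_bigO r])%:E
  else +oo%E.

(* Main.v *)
Require Import Defs.
From mathcomp Require Import all_boot all_order all_algebra.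
From mathcomp Require Import boolp classical_sets reals ereal exp.
From mathcomp Require Import zify lra.
From mathcomp Require Import finset fintype.
Set Implicit Arguments. Unset Strict Implicit. Unset Printing Implicit Defensive.
Import Order.TTheory GRing.Theory Num.Theory.
Local Close Scope classical_set_scope.
Local Open Scope set_scope.

Section Comb.
Variables d q : nat.
Notation V := (hvert d q).

Definition hD (a b : V) : {set 'I_d} := [set i | a i != b i].

Lemma adjP (v y : V) : reflect (exists k, hD v y = [set k]) (hadj v y).
Proof. exact: cards1P. Qed.

Lemma hD_off (v y : V) k l : hD v y = [set k] -> l != k -> v l = y l.
Proof.
move=> h lk; have : l \notin hD v y by rewrite h in_set1.
by rewrite inE negbK => /eqP.
Qed.

Lemma hD_at (v y : V) k : hD v y = [set k] -> v k != y k.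
Proof. move=> h; have : k \in hD v y by rewrite h set11.
by rewrite inE. Qed.

Lemma hDC (a b : V) : hD a b = hD b a.
Proof. by apply/setP=> l; rewrite !inE eq_sym. Qed.

Lemma agree_off (v y : V) k : (forall l, l != k -> y l = v l) -> y != v ->
  hD v y = [set k].
Proof.
move=> h yv; apply/setP=> l; rewrite !inE.
case: (eqVneq l k) => [->|lk]; last by rewrite h // eqxx.
apply/negP=> /eqP e; case/eqP: yv; apply/ffunP=> m.
by case: (eqVneq m k) => [->|mk]; [rewrite e | rewrite h].
Qed.

Definition upd (a b : V) (t : nat) : V :=
  [ffun l => if l == nth l (enum (hD a b)) t then b l else a l].

Definition Lset (A : {set V}) (a b : V) : {set V} :=
  [set y in A | [forall l, (l \in hD a b) || (y l == a l)]].

Definition cand (A : {set V}) (t : nat) (a b : V) : {set V} :=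
  if t == 0 then [set a]
  else if t <= 2 then hnbhd (upd a b t.-1) :&: A
  else if t == 3 then Lset A a b else Lset A a b :\ b.

Lemma key (A : {set V}) (v : V) :
  hnbhd v :&: A = set0 \/
  exists t : 'I_5, exists a, exists b, [/\ a \in A, b \in A &
     hnbhd v :&: A = cand A t a b].
Proof.
set T := hnbhd v :&: A.
have memT y : (y \in T) = hadj v y && (y \in A) by rewrite !inE.
case: (set_0Vmem T) => [->|[a aT]]; first by left. right.
move: (aT); rewrite memT => /andP[/adjP[k hk] aA].
case: (boolP [exists b in T, hD v b != hD v a]).
  case/exists_inP => b bT hb; move: (bT); rewrite memT => /andP[/adjP[k' hk'] bA].
  have kk' : k' != k by apply: contraNneq hb => e; rewrite hk hk' e.
  have hab : hD a b = [set k; k'].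
    apply/setP=> l; rewrite !inE.
    case: (eqVneq l k) => [->|lk].
      have kk2 : k != k' by rewrite eq_sym.
      by rewrite -(hD_off hk' kk2) eq_sym; apply: hD_at hk.
    case: (eqVneq l k') => [->|lk'].
      rewrite -(hD_off hk kk') ; exact: hD_at hk'.
    by rewrite -(hD_off hk lk) -(hD_off hk' lk') eqxx.
  set s := enum (hD a b).
  have ks : k \in s by rewrite mem_enum hab !inE eqxx.
  have tlt : index k s < 2.
    have c2 : size s = 2 by rewrite /s -cardE hab cards2 eq_sym kk'.
    by rewrite -c2 index_mem.
  have tlt5 : (index k s).+1 < 5 by rewrite ltnS (leq_trans tlt).
  exists (Ordinal tlt5), a, b; split => //.
  rewrite /cand /= tlt /T.
  congr (hnbhd _ :&: _); apply/ffunP=> l; rewrite ffunE -/s.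
  have -> : nth l s (index k s) = k by apply: nth_index.
  case: (eqVneq l k) => [->|lk]; last exact: hD_off hk lk.
  by apply: hD_off hk' _; rewrite eq_sym.
rewrite negb_exists_in => /forall_inP H.
have HT y : y \in T -> hD v y = [set k].
  by move=> yT; move: (H y yT); rewrite negbK => /eqP ->.
case: (boolP [exists b in T, b != a]); last first.
  rewrite negb_exists_in => /forall_inP H2.
  have o0 : 0 < 5 by [].
  exists (Ordinal o0), a, a; split => //.
  apply/setP=> y; rewrite /cand /= in_set1.
  apply/idP/idP; first by move=> yT; move: (H2 y yT); rewrite negbK.
  by move/eqP->.
case/exists_inP => b bT bna.
have agT y : y \in T -> forall l, l != k -> y l = a l.
  by move=> yT l lk; rewrite -(hD_off (HT y yT) lk) (hD_off hk lk).
case: (boolP (v \in A)) => vA.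
  have o4 : 4 < 5 by [].
  have va : v != a by apply: contraNneq (hD_at hk) => ->.
  have hav : hD a v = [set k] by rewrite hDC.
  exists (Ordinal o4), a, v; split => //.
  apply/setP=> y; rewrite /cand /Lset /= !inE hav.
  apply/idP/idP.
    move=> yT'; have yT : y \in T by rewrite memT. case/andP: yT' => _ ->.
    apply/andP; split.
      by apply: contraTneq (hD_at (HT y yT)) => ->; rewrite eqxx.
    apply/forallP=> l; rewrite inE; case: eqP => //= /eqP lk.
    by rewrite (agT y yT l lk).
  case/andP=> yv /andP[yA /forallP fy]; rewrite yA andbT; apply/adjP; exists k.
  apply: agree_off yv => l lk; move: (fy l); rewrite inE (negbTE lk) /= => /eqP ->.
  by rewrite (hD_off hk lk).
have o3 : 3 < 5 by [].
have hab : hD a b = [set k].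
  by apply: agree_off bna => l lk; apply: agT.
exists (Ordinal o3), a, b; split => //.
  by move: bT; rewrite memT => /andP[].
apply/setP=> y; rewrite /cand /Lset /= !inE hab.
apply/idP/idP.
  move=> yT'; have yT : y \in T by rewrite memT. case/andP: yT' => _ ->.
  apply/forallP=> l; rewrite inE; case: eqP => //= /eqP lk.
  by rewrite (agT y yT l lk).
case/andP=> yA /forallP fy; rewrite yA andbT; apply/adjP; exists k.
apply: agree_off; last by apply: contraNneq vA => <-.
move=> l lk; move: (fy l); rewrite inE (negbTE lk) /= => /eqP ->.
by rewrite (hD_off hk lk).
Qed.

Lemma traces_bound (A : {set V}) : #|htraces A| <= 1 + 5 * (#|A| * #|A|).
Proof.
pose X := setX (setX [set: 'I_5] A) A.
pose f (p : ('I_5 * V) * V) := cand A p.1.1 p.1.2 p.2.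
have sub : htraces A \subset set0 |: [set f p | p in X].
  apply/subsetP=> T /imsetP[v _ ->]; rewrite !inE.
  case: (key A v) => [->|[t [a [b [aA bA e]]]]]; first by rewrite eqxx.
  apply/orP; right; apply/imsetP; exists ((t, a), b) => //.
  by rewrite !inE aA bA.
apply: leq_trans (subset_leq_card sub) _.
rewrite cardsU1 leq_add ?leq_b1 //.
by apply: leq_trans (leq_imset_card _ _) _; rewrite !cardsX cardsT card_ord mulnA.
Qed.
End Comb.

Section Low.
Variable m : nat.
Notation W := (hvert 2 m.+1).
Definition pt (x y : 'I_m.+1) : W := [ffun i : 'I_2 => if i == ord0 then x else y].

Lemma hadj_pt a b c e : hadj (pt a b) (pt c e) = ((a != c) + (b != e) == 1)%N.
Proof.
rewrite /hadj -sum1_card big_mkcond /= big_ord_recl big_ord_recl big_ord0 !inE !ffunE /=.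
by case: (a != c); case: (b != e).
Qed.

Lemma pt_inj1 x x' z : pt x z = pt x' z -> x = x'.
Proof. by move/(congr1 (fun f : W => f ord0)); rewrite !ffunE. Qed.
Lemma pt_inj2 x z z' : pt x z = pt x z' -> z = z'.
Proof. by move/(congr1 (fun f : W => f ord_max)); rewrite !ffunE. Qed.

Definition X := [set~ (ord0 : 'I_m.+1)].
Definition Alow := [set pt x ord0 | x in X] :|: [set pt ord0 y | y in X].

Lemma card_X : #|X| = m. Proof. by rewrite cardsC1 card_ord. Qed.

Lemma card_Alow : #|Alow| = (m + m)%N.
Proof.
have i1 : injective (fun x => pt x ord0) by move=> ? ?; apply: pt_inj1.
have i2 : injective (pt ord0) by move=> ? ?; apply: pt_inj2.
rewrite /Alow cardsU (card_imset _ i1) (card_imset _ i2) card_X.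
suff -> : [set pt x ord0 | x in X] :&: [set pt ord0 y | y in X] = set0 by rewrite cards0 subn0.
apply/setP=> w; rewrite !inE; apply/negP=> /andP[/imsetP[x xX ->] /imsetP[y yX]].
move/(congr1 (fun f : W => f ord0)); rewrite !ffunE /= => ex.
by move: xX; rewrite !inE ex eqxx.
Qed.

Lemma low_traces : (m * m <= #|htraces Alow|)%N.
Proof.
pose F (p : 'I_m.+1 * 'I_m.+1) := hnbhd (pt p.1 p.2) :&: Alow.
have Fin : {in setX X X &, injective F}.
  move=> [i j] [i' j']; rewrite !inE /= => /andP[iX jX] /andP[iX' jX'] e.
  have h1 : pt i ord0 \in F (i, j).
    rewrite !inE hadj_pt eqxx jX /=; apply/orP; left; apply: imset_f; by rewrite !inE.
  have h2 : pt ord0 j \in F (i, j).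
    rewrite !inE hadj_pt eqxx iX /=; apply/orP; right; apply: imset_f; by rewrite !inE.
  rewrite e !inE hadj_pt in h1; rewrite e !inE hadj_pt in h2.
  move: h1 => /andP[h1 _]; move: h2 => /andP[h2 _].
  move: h1 h2; rewrite jX' iX' /=.
  by case: (eqVneq i' i) => [->|//]; case: (eqVneq j' j) => [->|].
have sub : [set F p | p in setX X X] \subset htraces Alow.
  by apply/subsetP=> T /imsetP[p _ ->]; apply: imset_f.
have := subset_leq_card sub; rewrite (card_in_imset Fin) cardsX card_X; exact.
Qed.

Lemma low_shatter : (m * m <= hshatter 2 m.+1 (m + m))%N.
Proof.
apply: leq_trans low_traces _.
by apply: (@leq_bigmax_cond _ (fun A : {set W} => #|A| == (m + m)%N)); rewrite card_Alow.
Qed.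
End Low.

Lemma hshatter_le d q n : (hshatter d q n <= 1 + 5 * (n * n))%N.
Proof. by apply/bigmax_leqP => A /eqP <-; exact: traces_bound. Qed.

Lemma pow_big n : (10 <= n)%N -> (1 + 5 * (n * n) < 2 ^ n)%N.
Proof.
have H k : (5 * ((k + 10) * (k + 10)) + 10 * (k + 10) + 6 <= 2 ^ (k + 10))%N.
  elim: k => [//|k IH]; rewrite addSn expnS; lia.
move=> n10; have := H (n - 10)%N; rewrite subnK //; lia.
Qed.

Lemma vcfin : vcdimH_finite.
Proof.
exists 9%N => d q A e; have := hshatter_le d q #|A|.
have : (#|htraces A| <= hshatter d q #|A|)%N.
  by apply: (@leq_bigmax_cond _ (fun B : {set hvert d q} => #|B| == #|A|)).
rewrite e card_powerset => h1 h2.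
rewrite leqNgt; apply/negP => h; have := pow_big h; lia.
Qed.

Section Real.
Variable R : realType.
Local Open Scope classical_set_scope.
Local Open Scope ring_scope.

Let SH n := [set x : R | exists d q : nat, x = (hshatter d q n)%:R]%classic.

Lemma SH_ne n : SH n !=set0.
Proof. by exists (hshatter 0 0 n)%:R; exists 0%N, 0%N. Qed.

Lemma SH_ub n : ubound (SH n) (1 + 5 * (n * n))%N%:R.
Proof. by move=> x [d [q ->]]; rewrite ler_nat hshatter_le. Qed.

Lemma shatterH_le n : shatterH R n <= (1 + 5 * (n * n))%N%:R.
Proof. rewrite /shatterH; apply: ge_sup; [exact: SH_ne | exact: SH_ub]. Qed.

Lemma shatterH_ge m : (m * m)%N%:R <= shatterH R (m + m).
Proof.
have hs : has_sup (SH (m + m)) by split; [exact: SH_ne | exists (1 + 5 * ((m+m) * (m+m)))%N%:R; exact: SH_ub].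
apply: le_trans (sup_upper_bound hs _); last by exists 2%N, m.+1.
by rewrite ler_nat low_shatter.
Qed.

Lemma bigO2 : shatterH_bigO (2%:R : R).
Proof.
exists 6, 1%N => n n1; apply: le_trans (shatterH_le n) _.
rewrite powR_mulrn ?ler0n // -natrX -natrM ler_nat; nia.
Qed.

Lemma notO (r : R) : r < 2%:R -> 0 < r -> ~ shatterH_bigO r.
Proof.
move=> r2 r0 [C [N H]].
set s := 2%:R - r; have s0 : 0 < s by rewrite subr_gt0.
set K := `|C| * 2%:R `^ r + 1.
have K0 : 0 < K by rewrite /K; have := powR_ge0 2%:R r; have := normr_ge0 C; nra.
set x0 := K `^ s^-1.
set m := maxn N (Num.truncn x0).+1.
have mx : x0 < m%:R.
  by apply: lt_le_trans (truncnS_gt x0) _; rewrite ler_nat leq_maxr.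
have m1 : (1 <= m)%N by rewrite /m leq_max orbT.
have Hms : K < m%:R `^ s.
  have -> : K = x0 `^ s by rewrite /x0 -powRrM mulVf ?gt_eqF // powRr1 // ltW.
  by apply: gt0_ltr_powR => //; rewrite nnegrE ?powR_ge0 ?ler0n.
have := H (m + m)%N (leq_trans (leq_maxl N _) (leq_addr _ _)).
have L := shatterH_ge m.
move=> U; have {L U} : (m * m)%N%:R <= C * (m + m)%N%:R `^ r := le_trans L U.
have -> : (m + m)%N%:R = 2%:R * (m%:R : R) by rewrite mulr_natl mulr2n natrD.
rewrite powRM ?ler0n //.
have Mr : 0 < (m%:R : R) `^ r by apply: powR_gt0; rewrite ltr0n.
have -> : (m * m)%N%:R = (m%:R : R) `^ r * (m%:R : R) `^ s.
  rewrite -powRD; last by rewrite pnatr_eq0 -lt0n m1 implybT.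
  by rewrite /s addrC subrK powR_mulrn ?ler0n // natrM expr2.
have -> : C * (2%:R `^ r * (m%:R : R) `^ r) = (m%:R : R) `^ r * (C * 2%:R `^ r).
  by rewrite [RHS]mulrCA (mulrC (m%:R `^ r)). 
rewrite ler_pM2l // => h.
have h2 : C * 2%:R `^ r <= `|C| * 2%:R `^ r by rewrite ler_wpM2r ?powR_ge0 ?ler_norm.
move: Hms; rewrite /K; lra.
Qed.

End Real.

Local Close Scope set_scope.
Local Open Scope classical_set_scope.
Local Open Scope ring_scope.
Theorem mainTheorem18 (R : realType) : vcdensityH R = (2%:R)%:E.
Proof.
rewrite /vcdensityH asboolT; last exact: vcfin.
congr (_%:E).
set E := [set r : R | 0 < r /\ shatterH_bigO r]%classic.
have E2 : E 2%:R by split; [rewrite ltr0n | exact: bigO2].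
have lb : lbound E 2%:R.
  move=> r [r0 Hr]; rewrite leNgt; apply/negP => r2; exact: notO r2 r0 Hr.
apply/eqP; rewrite eq_le; apply/andP; split.
  by apply: ge_inf; [exists 2%:R |].
by apply: lb_le_inf => //; exists 2%:R.
Qed.
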